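(* Let $R:\mathbb{T}^2\to\mathbb{T}^2$ be a linear involution of the torus $\mathbb{T}^2=\mathbb{R}^2/\mathbb{Z}^2$, i.e. $R$ is induced by an integer matrix $A$ with $\det A=\pm1$ and $R\circ R=\mathrm{Id}$, and assume $R\neq \pm\,\mathrm{Id}$. Then there exists a linear Anosov diffeomorphism $f$ of $\mathbb{T}^2$ which is $R$-reversible, i.e. $R\circ f=f^{-1}\circ R$.
   Context: A linear diffeomorphism of $\mathbb{T}^2$ is one induced (via the projection $\mathbb{R}^2\to\mathbb{R}^2/\mathbb{Z}^2$) by a $2\times 2$ matrix with integer entries and determinant $\pm1$; such maps preserve the normalized area. A linear Anosov diffeomorphism is one induced by such a matrix $L$ having no eigenvalue on the unit circle. A diffeomorphism $R$ is an involution if $R\circ R=\mathrm{Id}$, and $f$ is $R$-reversible if $R\circ f=f^{-1}\circ R$. *)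

(* Defs.v *)
(* torus T^2 = R^2/Z^2 modelled by column vectors in R^2
   (R : realType) up to integer translations. *)
From HB Require Import structures.
From mathcomp Require Import all_boot all_order all_algebra all_field.
From mathcomp Require Import reals.
Set Implicit Arguments. Unset Strict Implicit. Unset Printing Implicit Defensive.
Import Order.TTheory GRing.Theory Num.Theory.
Local Open Scope ring_scope.

Definition tor_eq (R : realType) (x y : 'cV[R]_2) : Prop :=
  forall i : 'I_2, (x i 0 - y i 0) \is a Num.int.

Definition lin_map (R : realType) (A : 'M[int]_2) (x : 'cV[R]_2) : 'cV[R]_2 :=
  map_mx (fun z : int => z%:~R) A *m x.

Definition unimodular (A : 'M[int]_2) : Prop :=
  \det A = 1 \/ \det A = -1.

Definition hyperbolic (L : 'M[int]_2) : Prop :=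
  forall a : algC, eigenvalue (map_mx (fun z : int => z%:~R) L) a -> `|a| != 1.

(* Main.v *)
Require Import Defs.
From HB Require Import structures.
From mathcomp Require Import all_boot all_order all_algebra all_field.
From mathcomp Require Import reals.
From mathcomp Require Import zify ring lra.
Import Order.TTheory GRing.Theory Num.Theory.
Local Open Scope ring_scope.

Lemma key (R : realType) (m : int) : (forall t : R, m%:~R * t \is a Num.int) -> m = 0.
Proof.
move=> H; apply/eqP; apply: contraT => m0.
have mR : (m%:~R : R) != 0 by rewrite intr_eq0.
have /intrP [k hk] := H (2 * m%:~R)^-1.
move: hk; rewrite invfM mulrCA mulfV // mulr1 => hk.
have h1 : (0 : R) < k%:~R by rewrite -hk invr_gt0 ltr0n.
have h2 : (k%:~R : R) < 1 by rewrite -hk invf_lt1 // ltr1n.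
move: h1 h2; rewrite ltr0z ltrz1 => h1 h2; lia.
Qed.

Lemma det2 (R : comNzRingType) (M : 'M[R]_2) :
  \det M = M 0 0 * M 1 1 - M 0 1 * M 1 0.
Proof.
rewrite (expand_det_row _ 0) !big_ord_recl big_ord0 /cofactor !det_mx11 !mxE /=.
rewrite addr0 expr0 expr1 mul1r mulN1r mulrN.
congr (_ * M _ _ - _ * M _ _). all: by [apply/val_inj | congr (M _ _); apply/val_inj].
Qed.

Lemma mulmx2 (R : comNzRingType) m n (M : 'M[R]_(m,2)) (N : 'M[R]_(2,n)) i j :
  (M *m N) i j = M i 0 * N 0 j + M i 1 * N 1 j.
Proof. rewrite !mxE !big_ord_recl big_ord0 addr0.
congr (_ + M _ _ * N _ _). all: by [apply/val_inj | congr (M _ _); apply/val_inj | congr (N _ _); apply/val_inj].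
Qed.

Lemma ord2 (i : 'I_2) : i = 0 \/ i = 1.
Proof. case: i => [[|[|k]] Hi]; [left|right|by []]; exact/val_inj. Qed.

Lemma mx2_eq (T : Type) (M N : 'M[T]_2) : M 0 0 = N 0 0 -> M 0 1 = N 0 1 ->
  M 1 0 = N 1 0 -> M 1 1 = N 1 1 -> M = N.
Proof.
move=> h1 h2 h3 h4; apply/matrixP => i j.
by case: (ord2 i) => ->; case: (ord2 j) => ->.
Qed.

Lemma lin_mapM (R : realType) (M N : 'M[int]_2) (x : 'cV[R]_2) :
  lin_map M (lin_map N x) = lin_map (M *m N) x.
Proof. by rewrite /lin_map mulmxA map_mxM. Qed.

Lemma lin_map_delta (R : realType) (M : 'M[int]_2) (t : R) i j :
  lin_map M (t *: delta_mx j 0) i 0 = (M i j)%:~R * t.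
Proof.
rewrite /lin_map mulmx2 !mxE.
case: (ord2 i) => ->; case: (ord2 j) => -> /=; ring.
Qed.

Lemma hyp_of (L : 'M[int]_2) : \det L = 1 -> 4 < (L 0 0 + L 1 1) ^+ 2 -> hyperbolic L.
Proof.
move=> dL tL z /eigenvalueP [v hv v0].
set g := map_mx _ L in hv.
set t := L 0 0 + L 1 1 in tL.
set tC : algC := t%:~R.
have dC : (L 0 1)%:~R * (L 1 0)%:~R = (L 0 0)%:~R * (L 1 1)%:~R - 1 :> algC.
  rewrite -!intrM -[1]/(1%:~R) -intrB; congr (_%:~R).
  by move: dL; rewrite det2 => <-; ring.
have CH : g *m g = tC *: g - 1%:M.
  apply: mx2_eq; rewrite mulmx2 !mxE /tC /t /= rmorphD.
  - by rewrite dC; ring.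
  - by ring.
  - by ring.
  - by rewrite [_ * (L 0 1)%:~R]mulrC dC; ring.
have e1 : v *m (g *m g) = (z ^+ 2) *: v.
  by rewrite mulmxA hv -scalemxAl hv scalerA -expr2.
have e2 : v *m (g *m g) = tC *: (z *: v) - v.
  by rewrite CH mulmxBr -scalemxAr hv mulmx1.
have e3 : (z ^+ 2 - tC * z + 1) *: v = 0.
  rewrite scalerDl scalerBl scale1r -e1 e2 scalerA.
  by rewrite [_ - v - _]addrAC subrr sub0r addNr.
have e4 : z ^+ 2 - tC * z + 1 = 0.
  by move: e3 => /eqP; rewrite scaler_eq0 (negbTE v0) orbF => /eqP.
apply/negP => /eqP z1.
have z0 : z != 0 by rewrite -normr_eq0 z1 oner_neq0.
have ht : tC = z + z^-1.
  apply: (mulIf z0); rewrite mulrDl mulVf // -expr2.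
  by rewrite -[RHS]subr0 -e4; ring.
have hn : `|tC| <= 2.
  by rewrite ht (le_trans (ler_normD _ _)) // normfV z1 invr1.
have : `|tC| ^+ 2 <= 2 ^+ 2.
  by rewrite !expr2 ler_pM.
rewrite real_normK ?realz // /tC -rmorphXn /= (_ : 2 ^+ 2 = 4%:~R); last by rewrite expr2 -natrM.
rewrite ler_int.
by rewrite leNgt tL.
Qed.

Lemma build (R : realType) (A : 'M[int]_2) (a b c p q r : int) :
  A 0 0 = a -> A 0 1 = b -> A 1 0 = c -> A 1 1 = - a ->
  a * a + b * c = 1 -> p * p + q * r = 1 ->
  4 < (2 * a * p + b * r + c * q) ^+ 2 ->
  exists L : 'M[int]_2,
    unimodular L /\ hyperbolic L /\
    (forall x : 'cV[R]_2,
        tor_eq (lin_map A (lin_map L x)) (lin_map (invmx L) (lin_map A x))).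
Proof.
move=> ha hb hc hd habc hpqr ht.
pose B : 'M[int]_2 := \matrix_(i, j) if i == 0 then (if j == 0 then p else q)
                                      else (if j == 0 then r else - p).
have AA : A *m A = 1%:M.
  apply: mx2_eq; rewrite mulmx2 !mxE /= ?ha ?hb ?hc ?hd; nia.
have BB : B *m B = 1%:M.
  apply: mx2_eq; rewrite mulmx2 !mxE /=; nia.
have dL : \det (A *m B) = 1.
  rewrite det_mulmx !det2 !mxE /= ?ha ?hb ?hc ?hd; nia.
exists (A *m B); split; first by left.
split.
  apply: hyp_of => //.
  rewrite !mulmx2 !mxE /= ?ha ?hb ?hc ?hd.
  by rewrite (_ : _ + _ = 2 * a * p + b * r + c * q) //; ring.
have LAL : (A *m B) *m (A *m (A *m B)) = A.
  by rewrite (mulmxA A A) AA mul1mx -mulmxA BB mulmx1.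
have uL : A *m B \in unitmx by rewrite unitmxE dL unitr1.
have Hinv : invmx (A *m B) *m A = A *m (A *m B).
  by rewrite -{2}LAL mulKmx.
move=> x i; rewrite !lin_mapM Hinv subrr; exact: rpred0.
Qed.

Lemma scale_delta (R : realType) (t : R) (i j : 'I_2) :
  (t *: delta_mx j 0 : 'cV[R]_2) i 0 = if i == j then t else 0.
Proof. by rewrite !mxE eqxx andbT; case: eqP => _; rewrite ?mulr1 ?mulr0. Qed.

Lemma one_ij (i j : 'I_2) : (1%:M : 'M[int]_2) i j = if i == j then 1 else 0.
Proof. by rewrite mxE; case: eqP. Qed.

Theorem proposition1 (R : realType) (A : 'M[int]_2) :
  unimodular A ->
  (* R o R = Id on T^2 *)
  (forall x : 'cV[R]_2, tor_eq (lin_map A (lin_map A x)) x) ->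
  (* R <> Id and R <> -Id on T^2 *)
  ~ (forall x : 'cV[R]_2, tor_eq (lin_map A x) x) ->
  ~ (forall x : 'cV[R]_2, tor_eq (lin_map A x) (- x)) ->
  exists L : 'M[int]_2,
    unimodular L /\ hyperbolic L /\
    (* R o f = f^{-1} o R on T^2 *)
    (forall x : 'cV[R]_2,
        tor_eq (lin_map A (lin_map L x)) (lin_map (invmx L) (lin_map A x))).
Proof.
move=> _ H2 Hid Hneg.
have AA : A *m A = 1%:M.
  apply/matrixP => i j; apply/eqP; rewrite -subr_eq0; apply/eqP.
  apply: (@key R) => t.
  have hE : ((A *m A) i j - (1%:M : 'M[int]_2) i j)%:~R * t =
     lin_map (A *m A) (t *: delta_mx j 0) i 0 - (t *: delta_mx j 0 : 'cV[R]_2) i 0.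
    rewrite lin_map_delta; move: ((A *m A) i j) => m.
    rewrite scale_delta one_ij; case: (i == j); rewrite ?subr0 ?rmorphB /= ?rmorph1; ring.
  by rewrite hE -lin_mapM; exact: H2.
have e00 := congr1 (fun M : 'M[int]_2 => M 0 0) AA.
have e01 := congr1 (fun M : 'M[int]_2 => M 0 1) AA.
have e10 := congr1 (fun M : 'M[int]_2 => M 1 0) AA.
have e11 := congr1 (fun M : 'M[int]_2 => M 1 1) AA.
rewrite /= mulmx2 !mxE /= in e00.
rewrite /= mulmx2 !mxE /= in e01.
rewrite /= mulmx2 !mxE /= in e10.
rewrite /= mulmx2 !mxE /= in e11.
move: e00 e01 e10 e11.
set a := A 0 0; set b := A 0 1; set c := A 1 0; set d := A 1 1.
move=> e00 e01 e10 e11.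
have [ad|ad] := eqVneq (a + d) 0.
  have hd : d = - a by lia.
  have [h2|h2] := boolP (2 < 2*a*a+b*b+c*c).
    apply: (@build R A a b c (-a) (-c) (-b)) => //; nia.
  have [/andP [/eqP b0 /eqP c0]|h3] := boolP ((b == 0) && (c == 0)).
    apply: (@build R A a b c (2 * a) (3) (-1)) => //; first by nia.
    rewrite b0 c0.
    by have -> : 2 * a * (2*a) + 0 * (-1) + 0 * 3 = 4 by nia.
  apply: (@build R A a b c (1) (0) (3 * b)) => //; first by nia.
  have a0 : a = 0 by nia.
  rewrite a0 in e00 *. have : b * b = 1 by nia. nia.
have b0 : b = 0.
  have : b * (a + d) = 0 by nia.
  by move/eqP; rewrite mulf_eq0 (negbTE ad) orbF => /eqP.
have c0 : c = 0.
  have : c * (a + d) = 0 by nia.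
  by move/eqP; rewrite mulf_eq0 (negbTE ad) orbF => /eqP.
have a2 : a ^+ 2 == 1 by rewrite expr2; nia.
have d2 : d ^+ 2 == 1 by rewrite expr2; nia.
move: a2 d2; rewrite !sqrf_eq1 => /orP [] /eqP ha /orP [] /eqP hd; 
  try by (exfalso; move: ad; rewrite ha hd; lia).
- exfalso; apply: Hid => x.
  have -> : A = 1%:M by apply: mx2_eq; rewrite !mxE /= -/a -/b -/c -/d.
  by move=> i; rewrite /lin_map map_mx1 mul1mx subrr; exact: rpred0.
- exfalso; apply: Hneg => x.
  have -> : A = - 1%:M by apply: mx2_eq; rewrite !mxE /= -/a -/b -/c -/d ?b0 ?c0 ?ha ?hd ?oppr0.
  by move=> i; rewrite /lin_map map_mxN map_mx1 mulNmx mul1mx subrr; exact: rpred0.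
Qed.
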